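(* Let $\varphi(\bm x,\bm y,\bm z)=\bigwedge_{i=1}^n \bm r_i^\top\bm x<\bm s_i^\top\bm y+\bm t_i^\top\bm z+h_i\wedge\bigwedge_{j=1}^m\bm u_j^\top\bm x=\bm v_j^\top\bm y+\bm w_j^\top\bm z+d_j$ as in the context, and let $\bm c\in\mathbb{R}^e$. Then $\exists^{\mathsf{ram}}\bm x,\bm y\colon\varphi(\bm x,\bm y,\bm c)$ holds over $\mathbb{R}$ if and only if there exists a $\bm c$-admissible profile $\bm p$ and a sequence compatible with $\bm p$ that satisfies the equality constraints for $\bm c$.
   Context: Here $\bm x,\bm y$ range over $\mathbb{R}^d$ and $\bm z$ over $\mathbb{R}^e$; $\bm r_i,\bm s_i,\bm u_j,\bm v_j\in\mathbb{Q}^d$, $\bm t_i,\bm w_j\in\mathbb{Q}^e$, $h_i,d_j\in\mathbb{Q}$. A profile is a tuple $\bm p=(\rho,\sigma,t_\rho,t_\sigma)$ of functions $\rho,\sigma\colon\{1,\dots,n\}\to\mathbb{R}\cup\{-\omega,\omega\}$ and $t_\rho,t_\sigma\colon\{1,\dots,n\}\to\{-\omega,-1,0,1,\omega\}$. For a sequence $(\bm a_k)_{k\ge1}$ in $\mathbb{R}^d$ let $\bm\rho_i=(\bm r_i^\top\bm a_k)_{k\ge1}$ and $\bm\sigma_i=(\bm s_i^\top\bm a_k)_{k\ge1}$. A sequence of pairwise distinct vectors is compatible with $\bm p$ if for every $i$ the following hold for $\bm\rho_i$ with respect to $(\rho(i),t_\rho(i))$, and likewise for $\bm\sigma_i$ with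 respect to $(\sigma(i),t_\sigma(i))$: type $0$ means the sequence is constantly equal to the value; type $1$ (resp. $-1$) means it is strictly increasing (resp. strictly decreasing) and converges from below (resp. above) to the real value; type $\omega$ (resp. $-\omega$) means it is strictly increasing and diverges to $\infty$ (resp. strictly decreasing and diverges to $-\infty$) and the value is $\omega$ (resp. $-\omega$). A profile is $\bm c$-admissible if for all $i$: (a) $\sigma(i)\neq-\omega$, and if $\rho(i)=\omega$ then $\sigma(i)=\omega$; (b) $\rho(i)<\sigma(i)+\bm t_i^\top\bm c+h_i$ whenever ($t_\rho(i)\in\{-1,0\}$ and $t_\sigma(i)\in\{0,1\}$) or ($t_\rho(i)=t_\sigma(i)=-1$); (c) $\rho(i)\le\sigma(i)+\bm t_i^\top\bm c+h_i$ whenever ($t_\rho(i)=0$ and $t_\sigma(i)=-1$) or $t_\rho(i)=1$. A sequence $(\bm a_k)$ satisfies the equality constraints for $\bm c$ if $\bm u_j^\top\bm a_k=\bm v_j^\top\bm a_\ell+\bm w_j^\top\bm c+d_j$ for all $j$ and all $k<\ell$. Ramsey quantifier: $\exists^{\mathsf{ram}}\bm x,\bm y\colon\varphi(\bm x,\bm y,\bm c)$ holds iff there is an infinite sequence of pairwise distinct $\bm a_i\in\mathbb{R}^d$ with $\varphi(\bm a_i,\bm a_j,\bm c)$ for all $i<j$. *)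

(* Defs.v *)
From HB Require Import structures.
From mathcomp Require Import all_boot all_order all_algebra.
From mathcomp Require Import all_classical all_reals all_analysis.
Set Implicit Arguments. Unset Strict Implicit. Unset Printing Implicit Defensive.
Import Order.TTheory GRing.Theory Num.Theory.
Import numFieldNormedType.Exports.
Local Open Scope classical_set_scope.
Local Open Scope ring_scope.

Definition dotq {R : realType} {d : nat} (r : 'cV[rat]_d) (x : 'cV[R]_d) : R :=
  \sum_(k < d) ratr (r k 0) * x k 0.

Definition phi {R : realType} {d e n m : nat}
  (r s : 'I_n -> 'cV[rat]_d) (t : 'I_n -> 'cV[rat]_e) (h : 'I_n -> rat)
  (u v : 'I_m -> 'cV[rat]_d) (w : 'I_m -> 'cV[rat]_e) (dd : 'I_m -> rat)
  (x y : 'cV[R]_d) (c : 'cV[R]_e) : Prop :=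
  (forall i, dotq (r i) x < dotq (s i) y + dotq (t i) c + ratr (h i)) /\
  (forall j, dotq (u j) x = dotq (v j) y + dotq (w j) c + ratr (dd j)).

Definition ramsey {R : realType} {d e : nat}
  (P : 'cV[R]_d -> 'cV[R]_d -> 'cV[R]_e -> Prop) (c : 'cV[R]_e) : Prop :=
  exists a : nat -> 'cV[R]_d, injective a /\
    forall i j : nat, (i < j)%N -> P (a i) (a j) c.

Inductive ptype := TNegOmega | TMinus1 | TZero | TPlus1 | TOmega.

(* values in R u {-omega, omega} are extended reals, -omega = -oo, omega = +oo *)
Record profile (R : realType) (n : nat) := Profile {
  rho : 'I_n -> \bar R;
  sigma : 'I_n -> \bar R;
  t_rho : 'I_n -> ptype;
  t_sigma : 'I_n -> ptype }.

Definition seq_compat {R : realType} (sq : nat -> R) (val : \bar R) (ty : ptype)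
  : Prop :=
  match ty with
  | TZero => exists l : R, val = l%:E /\ forall k, sq k = l
  | TPlus1 => exists l : R, val = l%:E /\ (forall k, sq k < sq k.+1) /\
                sq @ \oo --> l
  | TMinus1 => exists l : R, val = l%:E /\ (forall k, sq k.+1 < sq k) /\
                sq @ \oo --> l
  | TOmega => val = +oo%E /\ (forall k, sq k < sq k.+1) /\ sq @ \oo --> +oo
  | TNegOmega => val = -oo%E /\ (forall k, sq k.+1 < sq k) /\ sq @ \oo --> -oo
  end.

Definition compatible {R : realType} {d n : nat}
  (r s : 'I_n -> 'cV[rat]_d) (p : profile R n) (a : nat -> 'cV[R]_d) : Prop :=
  injective a /\
  forall i : 'I_n,
    seq_compat (fun k => dotq (r i) (a k)) (rho p i) (t_rho p i) /\
    seq_compat (fun k => dotq (s i) (a k)) (sigma p i) (t_sigma p i).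

Definition admissible {R : realType} {e n : nat}
  (t : 'I_n -> 'cV[rat]_e) (h : 'I_n -> rat) (c : 'cV[R]_e) (p : profile R n)
  : Prop :=
  forall i : 'I_n,
    let bound := (sigma p i + (dotq (t i) c + ratr (h i))%:E)%E in
    (sigma p i <> -oo%E /\ (rho p i = +oo%E -> sigma p i = +oo%E)) /\
    (((t_rho p i = TMinus1 \/ t_rho p i = TZero) /\
      (t_sigma p i = TZero \/ t_sigma p i = TPlus1)) \/
     (t_rho p i = TMinus1 /\ t_sigma p i = TMinus1) ->
     (rho p i < bound)%E) /\
    ((t_rho p i = TZero /\ t_sigma p i = TMinus1) \/ t_rho p i = TPlus1 ->
     (rho p i <= bound)%E).

Definition eq_constraints {R : realType} {d e m : nat}
  (u v : 'I_m -> 'cV[rat]_d) (w : 'I_m -> 'cV[rat]_e) (dd : 'I_m -> rat)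
  (c : 'cV[R]_e) (a : nat -> 'cV[R]_d) : Prop :=
  forall (j : 'I_m) (k l : nat), (k < l)%N ->
    dotq (u j) (a k) = dotq (v j) (a l) + dotq (w j) c + ratr (dd j).

(* Main.v *)
Require Import Defs.
From mathcomp Require Import all_boot all_order all_algebra.
From mathcomp Require Import all_classical all_reals all_analysis.
From mathcomp Require Import lra.
Import Order.TTheory GRing.Theory Num.Theory.
Import numFieldNormedType.Exports.
Local Open Scope classical_set_scope.
Local Open Scope ring_scope.
Set Implicit Arguments. Unset Strict Implicit.

Lemma nearW (P : nat -> Prop) : (\forall n \near \oo, P n) -> exists n, P n.
Proof. move=> [N _ HN]. exists N. apply: HN => /=. done. Qed.

Definition incr (g : nat -> nat) := forall k, (g k < g k.+1)%N.

Lemma incr_lt g : incr g -> forall i j, (i < j)%N -> (g i < g j)%N.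
Proof. move=> Hg; exact: (homo_ltn (fun y x z => @ltn_trans y x z) Hg). Qed.

Lemma incr_le g : incr g -> forall i j, (i <= j)%N -> (g i <= g j)%N.
Proof. move=> Hg; apply: (homo_leq (@leqnn) (fun y x z => @leq_trans y x z)) => k; exact: ltnW. Qed.

Lemma incr_ge g : incr g -> forall k, (k <= g k)%N.
Proof. move=> Hg; elim=> [//|k IH]; exact: leq_ltn_trans IH (Hg k). Qed.

Lemma incr_inj g : incr g -> injective g.
Proof.
move=> Hg i j E; case: (ltngtP i j) => // H; have := incr_lt Hg H; by rewrite E ltnn.
Qed.

Lemma incr_comp g g2 : incr g -> incr g2 -> incr (fun k => g (g2 k)).
Proof. by move=> H1 H2 k; apply: incr_lt. Qed.

Lemma incr_cvg g : incr g -> g @ \oo --> \oo.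
Proof.
move=> Hg; apply/cvgnyPge => A; near=> x; apply: leq_trans (incr_ge Hg x).
by near: x; exact: nbhs_infty_ge.
Unshelve. all: by end_near. Qed.

Section R.
Variable R : realType.

Lemma strict_incr_gen (f : nat -> R) : (forall k, f k < f k.+1) ->
  forall i j, (i < j)%N -> f i < f j.
Proof. move=> H; exact: (homo_ltn (fun y x z => @lt_trans _ _ y x z) H). Qed.
Lemma strict_decr_gen (f : nat -> R) : (forall k, f k.+1 < f k) ->
  forall i j, (i < j)%N -> f j < f i.
Proof. move=> H; apply: (@homo_ltn _ f (fun x y => y < x)) => // y x z a b; exact: lt_trans b a. Qed.

Lemma compat_sub (f : nat -> R) v t g : incr g -> seq_compat f v t ->
  seq_compat (fun k => f (g k)) v t.
Proof.
move=> Hg; have Hc := incr_cvg Hg.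
case: t => /=.
- move=> [-> [H1 H2]]; split=> //; split; first by move=> k; apply: strict_decr_gen.
  exact: (cvg_comp g f Hc H2).
- move=> [l [-> [H1 H2]]]; exists l; split=> //; split; first by move=> k; apply: strict_decr_gen.
  exact: (cvg_comp g f Hc H2).
- by move=> [l [-> H]]; exists l.
- move=> [l [-> [H1 H2]]]; exists l; split=> //; split; first by move=> k; apply: strict_incr_gen.
  exact: (cvg_comp g f Hc H2).
- move=> [-> [H1 H2]]; split=> //; split; first by move=> k; apply: strict_incr_gen.
  exact: (cvg_comp g f Hc H2).
Qed.


Lemma chain (P : nat -> nat -> Prop) k0 : (forall k, exists l, (k < l)%N /\ P k l) ->
  exists g : nat -> nat, g 0%N = k0 /\ forall j, (g j < g j.+1)%N /\ P (g j) (g j.+1).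
Proof. move=> H; have [F HF] := choice H; exists (fun j => iter j F k0); split=> // j /=; exact: HF. Qed.

Lemma incr_compat (f : nat -> R) : (forall k, f k < f k.+1) -> exists v t, seq_compat f v t.
Proof.
move=> H; have nd : nondecreasing_seq f by apply/nondecreasing_seqP => k; exact: ltW.
case: (pselect (cvgn f)) => Hc.
- by exists (limn f)%:E, TPlus1; exists (limn f).
- by exists +oo%E, TOmega; split=> //; split=> //; exact: nondecreasing_dvgn_lt.
Qed.

Lemma decr_compat (f : nat -> R) : (forall k, f k.+1 < f k) -> exists v t, seq_compat f v t.
Proof.
move=> H; case: (pselect (cvgn f)) => Hc.
- by exists (limn f)%:E, TMinus1; exists (limn f).
- exists -oo%E, TNegOmega; split=> //; split=> //; apply/cvgNry.
  apply: nondecreasing_dvgn_lt; last by rewrite is_cvgNE.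
  by rewrite nondecreasing_opp; apply/nonincreasing_seqP => k; exact: ltW.
Qed.

Lemma single (f : nat -> R) : exists g, incr g /\ exists v t, seq_compat (fun k => f (g k)) v t.
Proof.
pose peak k := forall l, (k < l)%N -> f l < f k.
case: (pselect (forall k, exists l, (k < l)%N /\ peak l)) => Hp.
- have [p0 [_ Hp0]] := Hp 0%N.
  have [g [g0 Hg]] := @chain (fun _ l => peak l) p0 Hp.
  have pk : forall j, peak (g j) by case=> [|j]; [rewrite g0 | exact: (Hg j).2].
  exists g; split; first by move=> j; exact: (Hg j).1.
  apply: decr_compat => k; apply: pk; exact: (Hg k).1.
- move/existsNP: Hp => [N HN].
  have HN' : forall k, (N < k)%N -> exists m, (k < m)%N /\ f k <= f m.
    move=> k Nk; have : ~ peak k by move=> pk; apply: HN; exists k.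
    move/existsNP => [m /not_implyP [km fm]]; exists m; split=>//; rewrite leNgt; exact/negP.
  have [g [g0 Hg]] : exists g : nat -> nat, g 0%N = N.+1 /\ forall j, (g j < g j.+1)%N /\ ((N < g j)%N -> f (g j) <= f (g j.+1)).
    apply: (@chain (fun k l => (N < k)%N -> f k <= f l)) => k.
    case: (ltnP N k) => Nk.
      by have [m [km fm]] := HN' k Nk; exists m; split.
    by exists k.+1; split=> // Nk'; move: Nk; rewrite leqNgt Nk'.
  have ig : incr g by move=> j; exact: (Hg j).1.
  have gN : forall j, (N < g j)%N.
    by move=> j; apply: leq_trans (incr_le ig (leq0n j)); rewrite g0.
  pose h j := f (g j).
  have hs : forall j, h j <= h j.+1 by move=> j; exact: (Hg j).2 (gN j).
  have hle : forall i j, (i <= j)%N -> h i <= h j.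
    exact: (homo_leq (fun x => lexx x) (fun y x z => @le_trans _ _ y x z) hs).
  case: (pselect (exists K, forall j, (K <= j)%N -> h j = h K)) => [[K HK]|HK].
  + exists (fun j => g (K + j)%N); split; first by move=> j /=; rewrite addnS; exact: ig.
    exists (h K)%:E, TZero; exists (h K); split=> // k; apply: HK; exact: leq_addr.
  + have H2 : forall k, exists l, (k < l)%N /\ h k < h l.
      move=> k; move/forallNP: HK => /(_ k) /existsNP [j /not_implyP [kj hj]].
      exists j; split.
        by rewrite ltn_neqAle kj andbT; apply/eqP => E; apply: hj; rewrite E.
      by rewrite lt_neqAle hle // andbT; apply/eqP => E; apply: hj; rewrite E.
    have [g2 [_ Hg2]] := @chain (fun k l => h k < h l) 0 H2.
    exists (fun k => g (g2 k)); split.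
      by apply: incr_comp ig _; move=> j; exact: (Hg2 j).1.
    apply: incr_compat => k; exact: (Hg2 k).2.
Qed.

Lemma multi (I : finType) (F : I -> nat -> R) :
  exists g, incr g /\ forall i, exists v t, seq_compat (fun k => F i (g k)) v t.
Proof.
suff : forall s : seq I, exists g, incr g /\ forall i, i \in s -> exists v t, seq_compat (fun k => F i (g k)) v t.
  by move=> /(_ (enum I)) [g [ig Hg]]; exists g; split=> // i; apply: Hg; rewrite mem_enum.
elim=> [|x s [g [ig Hg]]].
  by exists id; split=> // k; exact: ltnSn.
have [g2 [ig2 [v [t H]]]] := single (fun k => F x (g k)).
exists (fun k => g (g2 k)); split; first exact: incr_comp.
move=> i; rewrite in_cons => /orP [/eqP -> | /Hg [v' [t' H']]].
  by exists v, t.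
exists v', t'; exact: (compat_sub ig2 H').
Qed.


Lemma lim_le_ev (u : nat -> R) x C : u @ \oo --> x -> (\forall k \near \oo, u k <= C) -> x <= C.
Proof.
move=> Hu HC; rewrite leNgt; apply/negP => Cx.
have [k [a b]] := nearW (filterI HC (cvgr_gt x Hu C Cx)).
by move: (lt_le_trans b a); rewrite ltxx.
Qed.

Lemma lim_ge_ev (u : nat -> R) y c : u @ \oo --> y -> (\forall k \near \oo, c <= u k) -> c <= y.
Proof.
move=> Hu HC; rewrite leNgt; apply/negP => Cx.
have [k [a b]] := nearW (filterI HC (cvgr_lt y Hu c Cx)).
by move: (le_lt_trans a b); rewrite ltxx.
Qed.

Lemma incr_lt_lim (f : nat -> R) x : (forall k, f k < f k.+1) -> f @ \oo --> x -> forall k, f k < x.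
Proof.
move=> H Hf k; apply: lt_le_trans (H k) _; apply: lim_ge_ev Hf _.
near=> l; have : (k.+1 <= l)%N by near: l; exact: nbhs_infty_ge.
rewrite leq_eqVlt => /orP [/eqP -> //|kl]; apply: ltW; exact: strict_incr_gen.
Unshelve. all: by end_near. Qed.

Lemma decr_gt_lim (f : nat -> R) x : (forall k, f k.+1 < f k) -> f @ \oo --> x -> forall k, x < f k.
Proof.
move=> H Hf k; apply: le_lt_trans (H k); apply: lim_le_ev Hf _.
near=> l; have : (k.+1 <= l)%N by near: l; exact: nbhs_infty_ge.
rewrite leq_eqVlt => /orP [/eqP -> //|kl]; apply: ltW; exact: strict_decr_gen.
Unshelve. all: by end_near. Qed.

Lemma adm_fin (f g : nat -> R) (B : R) vf tf y tg :
  seq_compat f vf tf -> g @ \oo --> y ->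
  (exists M, forall l, g l <= M) ->
  (tg = TMinus1 -> forall l, y < g l) ->
  (tg = TZero \/ tg = TPlus1 -> forall l, g l <= y) ->
  (forall k l, (k < l)%N -> f k < g l + B) ->
  (y%:E <> -oo%E /\ (vf = +oo%E -> y%:E = +oo%E)) /\
  (((tf = TMinus1 \/ tf = TZero) /\ (tg = TZero \/ tg = TPlus1)) \/
     (tf = TMinus1 /\ tg = TMinus1) -> (vf < y%:E + B%:E)%E) /\
  ((tf = TZero /\ tg = TMinus1) \/ tf = TPlus1 -> (vf <= y%:E + B%:E)%E).
Proof.
move=> Hf Hg [M HM] Hm Hp Hlt.
have fky : forall k, f k <= y + B.
  move=> k; have : f k - B <= y.
    apply: lim_ge_ev Hg _; near=> l.
    have kl : (k < l)%N by near: l; exact: nbhs_infty_gt.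
    have := Hlt k l kl; lra.
  lra.
rewrite -EFinD.
case: tf Hf => /=.
- move=> [-> _]; split; first by split.
  by split; move=> H; exfalso; intuition discriminate.
- move=> [x [-> [Hd Hf]]]; split; first by split.
  split; last by move=> H; exfalso; intuition discriminate.
  move=> _; rewrite lte_fin; have := decr_gt_lim Hd Hf 0; have := fky 0%N; lra.
- move=> [x [-> Hc]]; split; first by split.
  split.
    move=> [[_ Ht]|[]] //; rewrite lte_fin.
    have := Hp Ht 1%N; have := Hlt 0%N 1%N erefl; rewrite Hc; lra.
  move=> _; rewrite lee_fin; have := fky 0%N; rewrite Hc; lra.
- move=> [x [-> [Hi Hf]]]; split; first by split.
  split; first by move=> H; exfalso; intuition discriminate.
  move=> _; rewrite lee_fin; apply: lim_le_ev Hf _; exact: filterE.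
- move=> [-> [_ Hf]]; split; last by split; move=> H; exfalso; intuition discriminate.
  split=> // _; exfalso.
  move/cvgryPgt: Hf => /(_ (M + B)) Hf.
  have [k Hk] := nearW Hf.
  have := Hlt k k.+1 (ltnSn k); have := HM k.+1; lra.
Unshelve. all: by end_near. Qed.


Lemma adm_pair (f g : nat -> R) (B : R) vf tf vg tg :
  seq_compat f vf tf -> seq_compat g vg tg ->
  (forall k l, (k < l)%N -> f k < g l + B) ->
  (vg <> -oo%E /\ (vf = +oo%E -> vg = +oo%E)) /\
  (((tf = TMinus1 \/ tf = TZero) /\ (tg = TZero \/ tg = TPlus1)) \/
     (tf = TMinus1 /\ tg = TMinus1) -> (vf < vg + B%:E)%E) /\
  ((tf = TZero /\ tg = TMinus1) \/ tf = TPlus1 -> (vf <= vg + B%:E)%E).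
Proof.
move=> Hf Hg Hlt.
case: tg Hg => /=.
- move=> [_ [_ Hg]]; exfalso.
  move/cvgrNyPlt: Hg => /(_ (f 0%N - B)) Hg.
  have [l [Hl1 Hl2]] := nearW (filterI Hg (nbhs_infty_gt 0%N)).
  have := Hlt 0%N l Hl2; lra.
- move=> [y [-> [Hd Hg]]].
  have HM : exists M, forall l, g l <= M.
    by exists (g 0%N) => l; case: l => [//|l]; apply: ltW; exact: strict_decr_gen.
  have Hm : TMinus1 = TMinus1 -> forall l, y < g l by move=> _; exact: decr_gt_lim.
  have Hp : TMinus1 = TZero \/ TMinus1 = TPlus1 -> forall l, g l <= y by move=> [].
  exact: (adm_fin Hf Hg HM Hm Hp Hlt).
- move=> [y [-> Hc]].
  have Hg : g @ \oo --> y.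
    by apply: cvg_near_cst; exact: filterE.
  have HM : exists M, forall l, g l <= M by exists y => l; rewrite Hc.
  have Hm : TZero = TMinus1 -> forall l, y < g l by [].
  have Hp : TZero = TZero \/ TZero = TPlus1 -> forall l, g l <= y by move=> _ l; rewrite Hc.
  exact: (adm_fin Hf Hg HM Hm Hp Hlt).
- move=> [y [-> [Hi Hg]]].
  have HM : exists M, forall l, g l <= M by exists y => l; apply: ltW; exact: incr_lt_lim.
  have Hm : TPlus1 = TMinus1 -> forall l, y < g l by [].
  have Hp : TPlus1 = TZero \/ TPlus1 = TPlus1 -> forall l, g l <= y.
    by move=> _ l; apply: ltW; exact: incr_lt_lim.
  exact: (adm_fin Hf Hg HM Hm Hp Hlt).
- move=> [-> _]; rewrite addye //; split; first by split.
  case: tf Hf => /= [[-> _]|[x [-> _]]|[x [-> _]]|[x [-> _]]|[-> _]];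
    rewrite ?ltry ?leey; split=> // H; exfalso; intuition discriminate.
Qed.


Lemma M2 (f g : nat -> R) (B y : R) : g @ \oo --> y ->
  (\forall k \near \oo, f k < y + B) ->
  \forall k \near \oo, \forall l \near \oo, f k < g l + B.
Proof.
move=> Hg; apply: filterS => k Hk.
have H : f k - B < y by lra.
by apply: filterS (cvgr_gt y Hg _ H) => l Hl; lra.
Qed.

Lemma pair_ev (f g : nat -> R) (B : R) vf tf vg tg :
  seq_compat f vf tf -> seq_compat g vg tg ->
  (vg <> -oo%E /\ (vf = +oo%E -> vg = +oo%E)) /\
  (((tf = TMinus1 \/ tf = TZero) /\ (tg = TZero \/ tg = TPlus1)) \/
     (tf = TMinus1 /\ tg = TMinus1) -> (vf < vg + B%:E)%E) /\
  ((tf = TZero /\ tg = TMinus1) \/ tf = TPlus1 -> (vf <= vg + B%:E)%E) ->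
  \forall k \near \oo, \forall l \near \oo, f k < g l + B.
Proof.
move=> Hf Hg [[Ha1 Ha2] [Hb Hc]].
case: tg Hg Ha1 Ha2 Hb Hc => /=.
- by move=> [-> _].
- move=> [y [-> [Hd Hg]]] _ Ha2 Hb Hc; rewrite -EFinD in Hb Hc.
  case: tf Hf Ha2 Hb Hc => /=.
  + move=> [_ [_ Hf]] _ _ _; apply: (M2 Hg).
    by move/cvgrNyPlt: Hf => /(_ (y + B)).
  + move=> [x [-> [_ Hf]]] _ Hb _; apply: (M2 Hg).
    have := Hb (or_intror (conj erefl erefl)); rewrite lte_fin => xy.
    exact: (cvgr_lt x Hf _ xy).
  + move=> [x [-> Hx]] _ _ Hc; apply: filterE => k; apply: filterE => l.
    have := Hc (or_introl (conj erefl erefl)); rewrite lee_fin Hx.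
    have := decr_gt_lim Hd Hg l; lra.
  + move=> [x [-> [Hi Hf]]] _ _ Hc; apply: (M2 Hg); apply: filterE => k.
    have := Hc (or_intror erefl); rewrite lee_fin.
    have := incr_lt_lim Hi Hf k; lra.
  + by move=> [-> _] /(_ erefl).
- move=> [y [-> Hy]] _ Ha2 Hb Hc; rewrite -EFinD in Hb Hc.
  have Hg : g @ \oo --> y by apply: cvg_near_cst; exact: filterE.
  case: tf Hf Ha2 Hb Hc => /=.
  + move=> [_ [_ Hf]] _ _ _; apply: (M2 Hg).
    by move/cvgrNyPlt: Hf => /(_ (y + B)).
  + move=> [x [-> [_ Hf]]] _ Hb _; apply: (M2 Hg).
    have := Hb (or_introl (conj (or_introl erefl) (or_introl erefl))); rewrite lte_fin => xy.
    exact: (cvgr_lt x Hf _ xy).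
  + move=> [x [-> Hx]] _ Hb _; apply: (M2 Hg); apply: filterE => k.
    have := Hb (or_introl (conj (or_intror erefl) (or_introl erefl))); rewrite lte_fin Hx //.
  + move=> [x [-> [Hi Hf]]] _ _ Hc; apply: (M2 Hg); apply: filterE => k.
    have := Hc (or_intror erefl); rewrite lee_fin.
    have := incr_lt_lim Hi Hf k; lra.
  + by move=> [-> _] /(_ erefl).
- move=> [y [-> [Hi Hg]]] _ Ha2 Hb Hc; rewrite -EFinD in Hb Hc.
  case: tf Hf Ha2 Hb Hc => /=.
  + move=> [_ [_ Hf]] _ _ _; apply: (M2 Hg).
    by move/cvgrNyPlt: Hf => /(_ (y + B)).
  + move=> [x [-> [_ Hf]]] _ Hb _; apply: (M2 Hg).
    have := Hb (or_introl (conj (or_introl erefl) (or_intror erefl))); rewrite lte_fin => xy.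
    exact: (cvgr_lt x Hf _ xy).
  + move=> [x [-> Hx]] _ Hb _; apply: (M2 Hg); apply: filterE => k.
    have := Hb (or_introl (conj (or_intror erefl) (or_intror erefl))); rewrite lte_fin Hx //.
  + move=> [x [-> [Hi2 Hf]]] _ _ Hc; apply: (M2 Hg); apply: filterE => k.
    have := Hc (or_intror erefl); rewrite lee_fin.
    have := incr_lt_lim Hi2 Hf k; lra.
  + by move=> [-> _] /(_ erefl).
- move=> [_ [_ Hg]] _ _ _ _; apply: filterE => k.
  move/cvgryPgt: Hg => /(_ (f k - B)); apply: filterS => l; lra.
Qed.

End R.

Fixpoint gseq (K : nat) (L : nat -> nat) (j : nat) : nat :=
  match j with 0 => K | j'.+1 => maxn (gseq K L j').+1 (L (gseq K L j')) end.

Lemma extract (Q : nat -> nat -> Prop) :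
  (\forall k \near \oo, \forall l \near \oo, Q k l) ->
  exists g, incr g /\ forall i j, (i < j)%N -> Q (g i) (g j).
Proof.
move=> [K _ HK].
have : forall k, exists L, (K <= k)%N -> forall l, (L <= l)%N -> Q k l.
  move=> k; case: (ltnP k K) => kK.
    by exists 0%N.
  have [L _ HL] := HK k kK; exists L => _ l Ll; exact: HL.
move=> /choice [Lf HLf].
pose L' k := \max_(i < k.+1) Lf i.
pose g := gseq K L'.
have ig : incr g by move=> j /=; exact: leq_maxl.
have gK : forall j, (K <= g j)%N by move=> j; exact: (incr_le ig (leq0n j)).
exists g; split=> // i j ij.
apply: HLf; first exact: gK.
case: j ij => // j ij.
rewrite /= (leq_trans _ (leq_maxr _ _)) //.
have H : (g i < (g j).+1)%N by rewrite ltnS; apply: incr_le.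
exact: (@leq_bigmax _ (fun i : 'I_(g j).+1 => Lf i) (Ordinal H)).
Qed.

Theorem mainTheorem11 (R : realType) (d e n m : nat)
  (r s : 'I_n -> 'cV[rat]_d) (t : 'I_n -> 'cV[rat]_e) (h : 'I_n -> rat)
  (u v : 'I_m -> 'cV[rat]_d) (w : 'I_m -> 'cV[rat]_e) (dd : 'I_m -> rat)
  (c : 'cV[R]_e) :
  ramsey (phi r s t h u v w dd) c <->
  exists p : profile R n, admissible t h c p /\
    exists a : nat -> 'cV[R]_d, compatible r s p a /\ eq_constraints u v w dd c a.
Proof.
split.
- move=> [a [ainj Ha]].
  pose F (x : 'I_n * bool) k := if x.2 then dotq (r x.1) (a k) else dotq (s x.1) (a k).
  have [g [ig Hg]] := multi F.
  have /choice [V HV] : forall x, exists vt : \bar R * ptype,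
      seq_compat (fun k => F x (g k)) vt.1 vt.2.
    by move=> x; have [v' [t' H]] := Hg x; exists (v', t').
  exists (@Profile R n (fun i => (V (i,true)).1) (fun i => (V (i,false)).1)
            (fun i => (V (i,true)).2) (fun i => (V (i,false)).2)).
  split.
  + move=> i /=; apply: (adm_pair (HV (i,true)) (HV (i,false))) => k l kl.
    have [H1 _] := Ha (g k) (g l) (incr_lt ig kl).
    by have := H1 i; rewrite /F /= addrA.
  + exists (fun k => a (g k)); split.
    * split; first by move=> x y /ainj /(incr_inj ig).
      by move=> i; split; [exact: (HV (i,true)) | exact: (HV (i,false))].
    * by move=> j k l kl; have [_ H2] := Ha (g k) (g l) (incr_lt ig kl); exact: H2.
- move=> [p [Hadm [a [[ainj Hcomp] Heq]]]].
  have Hi : forall i, \forall k \near \oo, \forall l \near \oo,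
      dotq (r i) (a k) < dotq (s i) (a l) + (dotq (t i) c + ratr (h i)).
    by move=> i; have [H1 H2] := Hcomp i; exact: (pair_ev H1 H2 (Hadm i)).
  have HQ : \forall k \near \oo, \forall l \near \oo, forall i,
      dotq (r i) (a k) < dotq (s i) (a l) + (dotq (t i) c + ratr (h i)).
    apply: filter_app (filter_forall _ Hi); apply: filterE => k Hk.
    exact: filter_forall.
  have [g [ig Hg]] := extract HQ.
  exists (fun k => a (g k)); split; first by move=> x y /ainj /(incr_inj ig).
  move=> k l kl; split.
    by move=> i; have := Hg k l kl i; rewrite addrA.
  by move=> j; exact: Heq (incr_lt ig kl).
Qed.
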